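(* Let $S$ be a semigroup with a maximal $\mathcal{J}$-class $J$ (with respect to $\le_{\mathcal{J}}$) such that $\langle J\rangle\neq S$. Then $\sigma_s(S)=2$.
   Context: For a semigroup $S$, $S^1$ is $S$ with an identity adjoined if $S$ has none, and $S$ otherwise. $x\mathcal{J}y$ iff $S^1xS^1=S^1yS^1$; the classes are $\mathcal{J}$-classes, ordered by $J_x\le_{\mathcal{J}}J_y$ iff $S^1xS^1\subseteq S^1yS^1$. $\langle J\rangle$ is the subsemigroup generated by $J$. $\sigma_s(S)$ is the least positive integer $n$ such that $S$ is the union of $n$ proper subsemigroups, or $\infty$ if none exists. *)

(* Defs.v *)
From Stdlib Require Import Arith.

Section Semigroup.
Variables (T : Type) (op : T -> T -> T).

(* y \in S^1 x S^1 *)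
Definition in_principal_ideal (x y : T) : Prop :=
  y = x \/ (exists a, y = op a x) \/ (exists b, y = op x b)
  \/ (exists a b, y = op (op a x) b).

Definition J_le (x y : T) : Prop :=
  forall z, in_principal_ideal x z -> in_principal_ideal y z.

Definition J_rel (x y : T) : Prop := J_le x y /\ J_le y x.

Definition maximal_J_class (J : T -> Prop) : Prop :=
  exists x, (forall z, J z <-> J_rel z x) /\ (forall y, J_le x y -> J_le y x).

Inductive generated (A : T -> Prop) : T -> Prop :=
| gen_base : forall x, A x -> generated A x
| gen_op : forall x y, generated A x -> generated A y -> generated A (op x y).

Definition is_subsemigroup (U : T -> Prop) : Prop :=
  (exists x, U x) /\ (forall x y, U x -> U y -> U (op x y)).

Definition proper_subsemigroup (U : T -> Prop) : Prop :=
  is_subsemigroup U /\ exists x, ~ U x.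

Definition union_of_proper (n : nat) : Prop :=
  exists F : nat -> T -> Prop,
    (forall i, i < n -> proper_subsemigroup (F i)) /\
    (forall x, exists i, i < n /\ F i x).

Definition sigma_s_eq (n : nat) : Prop :=
  0 < n /\ union_of_proper n /\ (forall m, 0 < m -> m < n -> ~ union_of_proper m).

End Semigroup.

(* Main.v *)
Require Import Defs.
From Stdlib Require Import Arith Lia Classical.

Lemma Jle_prod (T : Type) (op : T -> T -> T)
  (assoc : forall x y z, op x (op y z) = op (op x y) z) a b :
  J_le T op (op a b) a.
Proof.
  intros z [H|[[c H]|[[d H]|[c [d H]]]]]; subst z.
  - right; right; left; exists b; reflexivity.
  - right; right; right; exists c, b; now rewrite assoc.
  - right; right; left; exists (op b d); now rewrite assoc.
  - right; right; right; exists c, (op b d).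
    now rewrite <- !assoc.
Qed.

Theorem mainTheorem7 (T : Type) (op : T -> T -> T)
  (assoc : forall x y z, op x (op y z) = op (op x y) z)
  (J : T -> Prop) (hJ : maximal_J_class T op J)
  (hgen : exists s, ~ generated T op J s) :
  sigma_s_eq T op 2.
Proof.
  destruct hJ as [x [HJ Hmax]].
  destruct hgen as [s Hs].
  assert (Jx : J x) by (apply HJ; split; intros z h; exact h).
  assert (clos : forall a b, ~ J a -> ~ J b -> ~ J (op a b)).
  { intros a b Ha Hb Hab. apply Ha, HJ. apply HJ in Hab as [_ H2].
    assert (Hxa : J_le T op x a) by (intros z hz; apply (Jle_prod T op assoc a b), H2, hz).
    split; [apply Hmax; exact Hxa | exact Hxa]. }
  split; [lia|split].
  - exists (fun i => match i with 0 => generated T op J | _ => fun y => ~ J y end).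
    split.
    + intros i Hi. destruct i as [|[|i]]; [| |lia].
      * split; [split; [exists x; now constructor | intros; now constructor] |].
        exists s; exact Hs.
      * split; [split; [exists s; intro h; apply Hs; now constructor | exact clos]|].
        exists x; intro h; exact (h Jx).
    + intros y. destruct (classic (J y)) as [h|h].
      * exists 0; split; [lia|now constructor].
      * exists 1; split; [lia|exact h].
  - intros m Hm Hm2 [F [HF Hc]].
    assert (m = 1) by lia; subst m.
    destruct (HF 0 ltac:(lia)) as [_ [y Hy]].
    destruct (Hc y) as [i [Hi Hy']]. assert (i = 0) by lia; subst i. exact (Hy Hy').
Qed.
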